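(* Let $G$ be a finite group and $\Gamma$ a finite digraph with at least one arc such that $G\leq\mathrm{Aut}(\Gamma)$ acts primitively on the vertex set and transitively on the set of $s$-arcs of $\Gamma$ for some $s\geq 2$. Let $v$ be a vertex of $\Gamma$ and $G_v$ its stabiliser. Then for every prime $p$ dividing $|G_v|$, the group $G_v$ has at least two distinct subgroups of order $p$.
   Context: A digraph $\Gamma=(V,\to)$ consists of a finite vertex set $V$ and an anti-symmetric, irreflexive relation $\to$ on $V$. For $s\geq 0$, an $s$-arc is a sequence $v_0,\dots,v_s$ with $v_i\to v_{i+1}$ for $0\leq i<s$. $G$ is said to act transitively on $s$-arcs ($(G,s)$-arc-transitive) if it is transitive on the set of all $s$-arcs. *)

(* Defs.v *)
From mathcomp Require Import all_boot all_fingroup all_solvable.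
Set Implicit Arguments. Unset Strict Implicit. Unset Printing Implicit Defensive.
Local Open Scope group_scope.

Definition digraph (V : finType) (e : rel V) : Prop :=
  irreflexive e /\ (forall x y, e x y -> ~~ e y x).

Definition sarc (V : finType) (e : rel V) (s : nat) (w : seq V) : bool :=
  (size w == s.+1) && (if w is x :: w' then path e x w' else false).

Definition is_aut_group (V : finType) (e : rel V) (G : {set {perm V}}) : Prop :=
  forall g, g \in G -> forall x y, e (g x) (g y) = e x y.

Definition sarc_transitive (V : finType) (e : rel V) (G : {set {perm V}}) (s : nat) : Prop :=
  forall a b : seq V, sarc e s a -> sarc e s b ->
    exists2 g, g \in G & map g a = b.

(* Main.v *)
Require Import Defs.
From mathcomp Require Import all_boot all_fingroup all_solvable.
Local Open Scope group_scope.

Lemma stabE (V : finType) (G : {group {perm V}}) x z :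
  (z \in 'C_G[x | 'P]) = (z \in G) && (z x == x).
Proof. by rewrite !inE sub1set inE. Qed.

Lemma stabJ (V : finType) (G : {group {perm V}}) x g : g \in G ->
  'C_G[x | 'P] :^ g = 'C_G[g x | 'P].
Proof.
move=> Gg; rewrite conjIg conjGid // -astab1_act /= apermE //.
Qed.

Lemma out_nb (V : finType) (e : rel V) (G : {group {perm V}}) :
  (exists x y, e x y) -> is_aut_group e G ->
  [transitive G, on [set: V] | 'P] ->
  forall t, (exists t', e t t') /\ (exists t', e t' t).
Proof.
move=> [x0 [y0 exy]] aut tr t; split.
  have [g Gg ->] := atransP2 tr (in_setT x0) (in_setT t).
  by exists (g y0); rewrite aut.
have [g Gg ->] := atransP2 tr (in_setT y0) (in_setT t).
by exists (g x0); rewrite aut.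
Qed.
Arguments out_nb {V e G}.

Lemma ext_path (V : finType) (e : rel V) :
  (forall t, exists t', e t t') -> forall k t, exists w, size w = k /\ path e t w.
Proof.
move=> nb; elim=> [|k IH] t; first by exists [::].
have [t' et] := nb t; have [w [sw pw]] := IH t'.
by exists (t' :: w); rewrite /= et sw.
Qed.
Arguments ext_path {V e}.

Lemma arc_map (V : finType) (e : rel V) (G : {group {perm V}}) s :
  (forall t, exists t', e t t') -> 1 <= s -> sarc_transitive e G s ->
  forall a b c d, e a b -> e c d -> exists2 h, h \in G & h a = c /\ h b = d.
Proof.
move=> nb s1 st a b c d eab ecd.
have [w1 [s1' p1]] := ext_path nb s.-1 b.
have [w2 [s2' p2]] := ext_path nb s.-1 d.
have [||h Gh /= [E1 E2 _]] := st (a :: b :: w1) (c :: d :: w2).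
- by rewrite /sarc /= eab p1 s1' prednK // eqxx.
- by rewrite /sarc /= ecd p2 s2' prednK // eqxx.
by exists h.
Qed.
Arguments arc_map {V e G s}.

Lemma two_arc (V : finType) (e : rel V) (G : {group {perm V}}) s :
  (forall t, exists t', e t t') -> 2 <= s -> sarc_transitive e G s ->
  forall a m c c', e a m -> e m c -> e m c' ->
  exists2 h, h \in G & [/\ h a = a, h m = m & h c = c'].
Proof.
move=> nb s2 st a m c c' eam emc emc'.
have [w1 [s1' p1]] := ext_path nb s.-2 c.
have [w2 [s2' p2]] := ext_path nb s.-2 c'.
have [||h Gh /= [E1 E2 E3 _]] := st (a :: m :: c :: w1) (a :: m :: c' :: w2).
- by rewrite /sarc /= eam emc p1 s1'; case: s s2 {st s1' s2'} => [|[|n]] //= _; rewrite eqxx.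
- by rewrite /sarc /= eam emc' p2 s2'; case: s s2 {st s1' s2'} => [|[|n]] //= _; rewrite eqxx.
by exists h.
Qed.
Arguments two_arc {V e G s}.

Lemma key (V : finType) (e : rel V) (G : {group {perm V}}) s p :
  (forall t, exists t', e t t') -> 2 <= s -> sarc_transitive e G s ->
  is_aut_group e G -> prime p ->
  forall a m c, e a m -> e m c ->
  (forall y z, y \in 'C_G[m | 'P] -> z \in 'C_G[m | 'P] -> #[y] = p -> #[z] = p ->
     <[y]> = <[z]>) ->
  p %| #|'C_G[m | 'P]| ->
  forall y, y \in 'C_G[m | 'P] -> #[y] = p -> y a = a /\ y c = c.
Proof.
move=> nb s2 st aut pp a m c eam emc Q pdiv y Gmy oy.
pose A := ('C_G[a | 'P] :&: 'C_G[m | 'P])%G.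
pose B := ('C_G[m | 'P] :&: 'C_G[c | 'P])%G.
have [h Gh [ha hm]] := arc_map nb (leq_trans (isT : 0 < 2) s2) st _ _ _ _ eam emc.
have AB : #|A| = #|B|.
  by rewrite -(cardJg _ h) /= conjIg !stabJ // ha hm.
have eqG : 'C_G[m | 'P] = B * A.
  apply/eqP; rewrite eqEsubset mul_subG ?subsetIl ?subsetIr // andbT.
  apply/subsetP => x Gmx; move: (Gmx); rewrite stabE => /andP[Gx /eqP xm].
  have emxc : e m (x c) by rewrite -{1}xm aut.
  have [g Gg [ga gm gc]] := two_arc nb s2 st _ _ _ _ eam emc emxc.
  apply/mulsgP; exists (x * g^-1) g; last by rewrite mulgKV.
    rewrite inE !stabE groupM ?groupV //= !permM xm -{1}gm -gc !permK !eqxx.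
    by [].
  by rewrite inE !stabE Gg ga gm !eqxx.
have : p %| #|A| * #|A|.
  by rewrite {1}AB mul_cardG -eqG dvdn_mulr.
rewrite Euclid_dvdM // orbb => pA.
have pB : p %| #|B| by rewrite -AB.
have [z Az oz] := Cauchy pp pA.
have [z' Bz oz'] := Cauchy pp pB.
have yA : y \in A.
  have zm : z \in 'C_G[m | 'P] by move: Az; rewrite /A /= in_setI => /andP[].
  by rewrite -cycle_subG (Q y z) // cycle_subG.
have yB : y \in B.
  have zm : z' \in 'C_G[m | 'P] by move: Bz; rewrite /B /= in_setI => /andP[].
  by rewrite -cycle_subG (Q y z') // cycle_subG.
move: yA yB; rewrite /A /B /= !inE !sub1set !inE /=.
move=> /and3P[/andP[_ /eqP ya] _ _] /and3P[_ _ /eqP yc]; rewrite !apermE in ya yc; by [].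
Qed.

Lemma conn_ind (T : finType) (r : rel T) (P : T -> Prop) x :
  P x -> (forall a b, P a -> r a b -> P b) -> forall y, connect r x y -> P y.
Proof.
move=> Px step y /connectP[q pq ->].
elim: q x Px pq => //= b q IH a Pa /andP[rab pq].
exact: IH (step _ _ Pa rab) pq.
Qed.

Definition urel (V : finType) (e : rel V) : rel V := [rel a b | e a b || e b a].
Arguments urel {V}.
Arguments conn_ind {T r P x}.

Lemma conn_g (V : finType) (e : rel V) (G : {group {perm V}}) g a b :
  is_aut_group e G -> g \in G -> connect (urel e) a b -> connect (urel e) (g a) (g b).
Proof.
move=> aut Gg; apply: (@conn_ind _ _ (fun y => connect (urel e) (g a) (g y)) a).
  exact: connect0.
move=> c d Hc rcd; apply: connect_trans Hc (connect1 _).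
by rewrite /urel /= !aut.
Qed.
Arguments conn_g {V e G g a b}.

Lemma conn_all (V : finType) (e : rel V) (G : {group {perm V}}) :
  digraph e -> (exists x y, e x y) -> is_aut_group e G ->
  [primitive G, on [set: V] | 'P] -> forall v y, connect (urel e) v y.
Proof.
move=> [irr _] arc aut prim v.
have tr : [transitive G, on [set: V] | 'P] by case/andP: prim.
have csym : connect_sym (urel e).
  by apply: sym_connect_sym => a b; rewrite /urel /= orbC.
pose C := [set y | connect (urel e) v y].
have inN g : g \in G -> connect (urel e) v (g v) -> g \in 'N_G(C | 'P).
  move=> Gg cvg; rewrite inE Gg /=; apply/astabsP => x.
  rewrite !inE /= ?apermE; apply/idP/idP => Hx.
    have := conn_g aut (groupVr Gg) Hx; rewrite permK => H1.
    apply: connect_trans H1.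
    have := conn_g aut (groupVr Gg) cvg; rewrite permK csym.
    done.
  exact: connect_trans cvg (conn_g aut Gg Hx).
have sub : 'C_G[v | 'P] \subset 'N_G(C | 'P).
  apply/subsetP => g; rewrite stabE => /andP[Gg /eqP gv].
  by apply: inN => //; rewrite gv connect0.
move: prim; rewrite (trans_prim_astab (in_setT v) tr) => /maximal_eqP[_ max].
have [HC | HG] := max _ sub (subsetIl _ _).
  have [w evw] := (out_nb arc aut tr v).1.
  have [g Gg wE] := atransP2 tr (in_setT v) (in_setT w).
  have evg : e v (g v) by rewrite -[g v]/(aperm v g) -wE.
  have : g \in 'N_G(C | 'P) by apply: inN => //; apply: connect1; rewrite /urel /= evg.
  rewrite HC stabE => /andP[_ /eqP gv].
  by rewrite gv irr in evg.
move=> y; have [g Gg ->] := atransP2 tr (in_setT v) (in_setT y).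
have : g \in 'N_G(C | 'P) by rewrite HG.
rewrite inE => /andP[_ /astabsP /(_ v)]; rewrite !inE connect0 /=.
by move=> ->.
Qed.
Arguments conn_all {V e G}.
Arguments key {V e G s p}.

Theorem corollary2p8 (V : finType) (e : rel V) (G : {group {perm V}}) (s : nat) :
  digraph e ->
  (exists x y, e x y) ->
  is_aut_group e G ->
  [primitive G, on [set: V] | 'P] ->
  2 <= s ->
  sarc_transitive e G s ->
  forall (v : V) (p : nat), prime p -> p %| #|'C_G[v | 'P]| ->
  exists H K : {group {perm V}},
    [/\ H \subset 'C_G[v | 'P], K \subset 'C_G[v | 'P],
        #|H| = p, #|K| = p & H :!=: K].
Proof.
move=> dg arc aut prim s2 st v p pp pdiv.
have tr : [transitive G, on [set: V] | 'P] by case/andP: prim.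
have nb t := (out_nb arc aut tr t).1.
have nb' t := (out_nb arc aut tr t).2.
have [x0 Gx0 ox0] := Cauchy pp pdiv.
case: (boolP [forall y in 'C_G[v | 'P], (#[y] == p) ==> (<[y]> == <[x0]>)]);
  last first.
  rewrite negb_forall_in => /exists_inP[y Gy]; rewrite negb_imply => /andP[/eqP oy ne].
  exists <[x0]>%G, <[y]>%G; split; rewrite ?cycle_subG //.
  by rewrite eq_sym.
move=> /forall_inP Hall.
have Qv y z : y \in 'C_G[v | 'P] -> z \in 'C_G[v | 'P] -> #[y] = p -> #[z] = p ->
    <[y]> = <[z]>.
  move=> Gy Gz oy oz.
  by rewrite (eqP (implyP (Hall y Gy) (introT eqP oy)))
             (eqP (implyP (Hall z Gz) (introT eqP oz))).
have Qm m : (forall y z, y \in 'C_G[m | 'P] -> z \in 'C_G[m | 'P] -> #[y] = p ->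
    #[z] = p -> <[y]> = <[z]>) /\ p %| #|'C_G[m | 'P]|.
  have [g Gg mE] := atransP2 tr (in_setT v) (in_setT m).
  have Em : 'C_G[m | 'P] = 'C_G[v | 'P] :^ g by rewrite stabJ // mE.
  rewrite Em cardJg; split => // y z; rewrite !mem_conjg => Gy Gz oy oz.
  apply: (@conjsg_inj _ g^-1); rewrite -!cycleJ; apply: Qv; rewrite ?orderJ //.
have fix_all : forall y, x0 \in 'C_G[y | 'P].
  move=> y; have := conn_all dg arc aut prim v y.
  apply: (@conn_ind _ _ (fun y => x0 \in 'C_G[y | 'P]) v) => // a b Ha.
  move: (Ha); rewrite stabE => /andP[Gx _].
  have [Qa pa] := Qm a.
  rewrite /urel /= => /orP[eab | eba].
    have [u eua] := nb' a.
    have [_ xb] := key nb s2 st aut pp _ _ _ eua eab Qa pa _ Ha ox0.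
    by rewrite stabE Gx xb eqxx.
  have [c eac] := nb a.
  have [xb _] := key nb s2 st aut pp _ _ _ eba eac Qa pa _ Ha ox0.
  by rewrite stabE Gx xb eqxx.
have x01 : x0 = 1.
  apply/permP => y; rewrite perm1.
  by move: (fix_all y); rewrite stabE => /andP[_ /eqP].
by move: ox0; rewrite x01 order1 => p1; rewrite -p1 in pp.
Qed.
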